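(* Let $a,b,g,h>0$ with $h=g+b+a$. Then the Minkowskian planar 4R linkage with these link lengths is of crank–rocker type.
   Context: Link lengths: $a$ input crank, $b$ output crank, $g$ ground (fixed link), $h$ coupler. Put $T_1=g+b-h-a$, $T_2=a-g+b-h$, $T_3=g-a-b-h$, $T_4=g-a+b+h$, $T_5=a-h+g+b$. The input crank is a crank if $T_1T_2\ge0$ and $T_3T_4\le0$, a rocker if $T_1T_2<0$ and $T_3T_4\le0$, and a superrocker if $T_1T_2<0$ and $T_3T_4>0$. The output crank is a crank if $T_1\ge0$ and $T_4T_5\ge0$, a rocker if $T_1<0$ and $T_4T_5\ge0$, and a superrocker if $T_1<0$ and $T_4T_5<0$. The linkage is of type ''X–Y'' if its input crank is of type X and its output crank of type Y. *)

(* Defs.v *)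
From HB Require Import structures.
From mathcomp Require Import all_boot all_order all_algebra.
Set Implicit Arguments. Unset Strict Implicit. Unset Printing Implicit Defensive.
Import Order.TTheory GRing.Theory Num.Theory.
Local Open Scope ring_scope.

Inductive crank_kind := Crank | Rocker | Superrocker.

Section Linkage.
Variable R : realFieldType.
(* a input crank, b output crank, g ground link, h coupler *)
Variables a b g h : R.

Definition T1 : R := g + b - h - a.
Definition T2 : R := a - g + b - h.
Definition T3 : R := g - a - b - h.
Definition T4 : R := g - a + b + h.
Definition T5 : R := a - h + g + b.

Definition input_is (k : crank_kind) : Prop :=
  match k with
  | Crank => 0 <= T1 * T2 /\ T3 * T4 <= 0
  | Rocker => T1 * T2 < 0 /\ T3 * T4 <= 0
  | Superrocker => T1 * T2 < 0 /\ 0 < T3 * T4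
  end.

Definition output_is (k : crank_kind) : Prop :=
  match k with
  | Crank => 0 <= T1 /\ 0 <= T4 * T5
  | Rocker => T1 < 0 /\ 0 <= T4 * T5
  | Superrocker => T1 < 0 /\ T4 * T5 < 0
  end.

Definition linkage_type (X Y : crank_kind) : Prop := input_is X /\ output_is Y.
End Linkage.

(* Main.v *)
Require Import Defs.
From mathcomp Require Import all_boot all_order all_algebra.
From mathcomp Require Import ring lra.
Import Order.TTheory GRing.Theory Num.Theory.
Local Open Scope ring_scope.

Theorem mainTheorem15 (R : realFieldType) (a b g h : R)
  (ha : 0 < a) (hb : 0 < b) (hg : 0 < g) (hh : 0 < h)
  (hsum : h = g + b + a) :
  linkage_type a b g h Crank Rocker.
Proof.
subst h; rewrite /linkage_type /= /T1 /T2 /T3 /T4 /T5.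
have E1 : g + b - (g + b + a) - a = -(2*a) by ring.
have E2 : a - g + b - (g + b + a) = -(2*g) by ring.
have E3 : g - a - b - (g + b + a) = -(2*(a+b)) by ring.
have E4 : g - a + b + (g + b + a) = 2*(g+b) by ring.
have E5 : a - (g + b + a) + g + b = 0 by ring.
rewrite E1 E2 E3 E4 E5 mulr0.
split; split.
- rewrite mulrNN; apply: mulr_ge0; lra.
- rewrite mulNr oppr_le0; apply: mulr_ge0; lra.
- lra.
- lra.
Qed.
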